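(* Let $v>71$ and let $(X,\mathcal{B})$ be an STS$(v)$ with $X=\{1,\dots,v\}$. Then there is a sequencing $\pi=[x_1\,x_2\,\cdots\,x_v]$ of $X$ that is $4$-good for $(X,\mathcal{B})$, i.e. for every $1\le i\le v-3$, the set $\{x_i,x_{i+1},x_{i+2},x_{i+3}\}$ contains no block of $\mathcal{B}$.
   Context: A Steiner triple system of order $v$, STS$(v)$, is a pair $(X,\mathcal{B})$ where $X$ is a set of $v$ points and $\mathcal{B}$ is a set of 3-subsets of $X$ (blocks) such that every pair of distinct points lies in exactly one block. A sequencing of $X$ is an ordering $[x_1\,x_2\,\cdots\,x_v]$ of all points of $X$, each appearing exactly once. For an integer $\ell$, a sequencing is $\ell$-good if no $\ell$ consecutive points of it contain a block of $\mathcal{B}$. *)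

(* Defs.v *)
From mathcomp Require Import all_boot.
Set Implicit Arguments. Unset Strict Implicit. Unset Printing Implicit Defensive.

(* Point set X = {1,...,v} is modelled by 'I_v (relabelling 0..v-1). *)
Definition is_STS (v : nat) (B : {set {set 'I_v}}) : Prop :=
  (forall b, b \in B -> #|b| = 3) /\
  (forall x y : 'I_v, x != y -> #|[set b in B | (x \in b) && (y \in b)]| = 1).

Definition is_sequencing (v : nat) (s : seq 'I_v) : Prop :=
  uniq s /\ size s = v.

Definition is_good (v l : nat) (B : {set {set 'I_v}}) (s : seq 'I_v) : Prop :=
  forall i, i + l <= size s ->
    forall b, b \in B -> ~~ (b \subset [set x in take l (drop i s)]).

(* Main.v *)
Require Import Defs.
From mathcomp Require Import all_boot zify.
Set Implicit Arguments. Unset Strict Implicit. Unset Printing Implicit Defensive.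

Definition okb {v} (B : {set {set 'I_v}}) (l : seq 'I_v) : bool :=
  [forall b in B, ~~ (b \subset [set x in l])].

Fixpoint G {v} (B : {set {set 'I_v}}) (s : seq 'I_v) : bool :=
  if s is x :: s' then okb B (x :: take 3 s') && G B s' else true.

Definition intri {v} (B : {set {set 'I_v}}) (a c z : 'I_v) : Prop :=
  exists2 b, b \in B & [/\ a \in b, c \in b & z \in b].

Definition third {v} (B : {set {set 'I_v}}) (a c : 'I_v) : 'I_v :=
  odflt a [pick z | (z != a) && (z != c) && [exists b in B, [&& a \in b, c \in b & z \in b]]].

Lemma size_sub_card {v} (s : seq 'I_v) (A : {set 'I_v}) :
  uniq s -> {subset s <= A} -> size s <= #|A|.
Proof.
move=> us sA; rewrite -(card_uniqP us); apply: subset_leq_card.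
by apply/subsetP => x /sA.
Qed.

Lemma blk_uniq {v} (B : {set {set 'I_v}}) a c b1 b2 : is_STS B -> a != c ->
  b1 \in B -> b2 \in B -> a \in b1 -> c \in b1 -> a \in b2 -> c \in b2 -> b1 = b2.
Proof.
case=> _ H ac b1B b2B a1 c1 a2 c2; have := H _ _ ac; move/eqP/cards1P=> [b0 E].
have : b1 \in [set b in B | (a \in b) && (c \in b)] by rewrite inE b1B a1 c1.
have : b2 \in [set b in B | (a \in b) && (c \in b)] by rewrite inE b2B a2 c2.
by rewrite E !inE => /eqP -> /eqP ->.
Qed.

Lemma blk_three {v} (B : {set {set 'I_v}}) b a c z w : is_STS B -> b \in B ->
  a \in b -> c \in b -> z \in b -> w \in b -> uniq [:: a; c; z] ->
  w != a -> w != c -> w = z.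
Proof.
case=> H3 _ bB ab cb zb wb u wa wc; apply/eqP; apply/negPn/negP => wz.
have : size [:: w; a; c; z] <= #|b|.
  apply: size_sub_card; first by rewrite cons_uniq u andbT !inE !negb_or wa wc wz.
  by move=> x; rewrite !inE => /or4P [] /eqP ->.
by rewrite H3.
Qed.

Lemma third_spec {v} (B : {set {set 'I_v}}) a c : is_STS B -> a != c ->
  [/\ intri B a c (third B a c), third B a c != a & third B a c != c].
Proof.
move=> ST ac; have [H3 H] := ST.
have := H _ _ ac; move/eqP/cards1P=> [b0 E].
have : b0 \in [set b in B | (a \in b) && (c \in b)] by rewrite E inE.
rewrite inE => /andP [b0B /andP [ab cb]].
have [z zb /andP [za zc]] : exists2 z, z \in b0 & (z != a) && (z != c).
  case/boolP: [exists z in b0, (z != a) && (z != c)] => [/exists_inP // | /exists_inPn Hn].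
  have : #|b0| <= 2.
    apply: (@leq_trans #|[set a; c]|); last by rewrite cards2 ac.
    apply: subset_leq_card; apply/subsetP=> x xb.
    by have := Hn x xb; rewrite negb_and !negbK !inE => /orP [] ->; rewrite ?orbT.
  by rewrite H3.
rewrite /third; case: pickP => [w /andP [/andP [wa wc] /exists_inP [b bB /and3P [ab' cb' wb]]]|/(_ z)] /=.
  by split => //; exists b.
by rewrite za zc /=; move/negbT/negP; case; apply/exists_inP; exists b0 => //; rewrite ab cb zb.
Qed.

Lemma third_uniq {v} (B : {set {set 'I_v}}) a c z : is_STS B -> a != c ->
  z != a -> z != c -> intri B a c z -> z = third B a c.
Proof.
move=> ST ac za zc [b bB [ab cb zb]].
have [[b' b'B [ab' cb' tb']] ta tc] := third_spec ST ac.
have E := blk_uniq ST ac bB b'B ab cb ab' cb'; subst b'.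
apply/esym; apply: (blk_three ST bB ab cb zb tb') => //.
by rewrite /= !inE negb_or ac eq_sym za eq_sym zc.
Qed.

Lemma third_sym {v} (B : {set {set 'I_v}}) a c : is_STS B -> a != c ->
  third B a c = third B c a.
Proof.
move=> ST ac; have [[b bB [ab cb tb]] ta tc] := third_spec ST ac.
by apply: third_uniq => //; [rewrite eq_sym | exists b].
Qed.

Lemma third_swap {v} (B : {set {set 'I_v}}) a c z : is_STS B -> a != c ->
  z != a -> z != c -> z = third B a c -> a = third B c z.
Proof.
move=> ST ac za zc E; have [[b bB [ab cb tb]] _ _] := third_spec ST ac.
rewrite -E in tb; apply: (third_uniq ST); [by rewrite eq_sym | exact: ac | by rewrite eq_sym | by exists b].
Qed.

Lemma okb_sub {v} (B : {set {set 'I_v}}) l l' : {subset l' <= l} -> okb B l -> okb B l'.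
Proof.
move=> sub /forall_inP H; apply/forall_inP => b bB; apply/negP => bs.
have := H b bB; rewrite (subset_trans bs) //; apply/subsetP => x; rewrite !inE; exact: sub.
Qed.

Lemma okb_small {v} (B : {set {set 'I_v}}) l : is_STS B -> size l < 3 -> okb B l.
Proof.
case=> H3 _ sl; apply/forall_inP => b bB; apply/negP => bs.
have := subset_leq_card bs; rewrite (H3 b bB) => h.
have : #|[set x in l]| <= size l by rewrite cardsE card_size.
move=> h2; have := leq_ltn_trans h2 sl; by rewrite ltnNge h.
Qed.

Lemma okb_ins3 {v} (B : {set {set 'I_v}}) p q r y : is_STS B ->
  okb B [:: p; q; r] -> y \notin [:: p; q; r] ->
  (p != q -> y != third B p q) -> (p != r -> y != third B p r) ->
  (q != r -> y != third B q r) -> okb B [:: y; p; q; r].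
Proof.
move=> ST /forall_inP H yn ypq ypr yqr; apply/forall_inP => b bB; apply/negP => bs.
have [H3 _] := ST.
case/boolP: (y \in b) => yb; last first.
  move/negP: (H b bB); apply.
  apply/subsetP => x xb; have := subsetP bs x xb; rewrite !inE => /orP [/eqP E|//].
  by rewrite -E xb in yb.
have : #|b :\ y| == 2 by have := cardsD1 y b; rewrite yb (H3 b bB) /= add1n => -[] <-.
move/cards2P => [a [c [ac E]]].
have /setD1P [ay ab] : a \in b :\ y by rewrite E !inE eqxx.
have /setD1P [cy cb] : c \in b :\ y by rewrite E !inE eqxx orbT.
have ya : y != a by rewrite eq_sym.
have yc : y != c by rewrite eq_sym.
have Ey : y = third B a c by apply: third_uniq => //; exists b.
have aP : a \in [:: p; q; r].
  by have := subsetP bs a ab; rewrite !inE (negbTE ay).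
have cP : c \in [:: p; q; r].
  by have := subsetP bs c cb; rewrite !inE (negbTE cy).
move: aP cP ac Ey; rewrite !inE.
move=> /or3P [] /eqP -> /or3P [] /eqP -> ac Ey; rewrite ?eqxx // in ac.
- by move: (ypq ac); rewrite Ey eqxx.
- by move: (ypr ac); rewrite Ey eqxx.
- by move: ypq; rewrite eq_sym ac Ey (third_sym ST ac) eqxx => /(_ isT).
- by move: (yqr ac); rewrite Ey eqxx.
- by move: ypr; rewrite eq_sym ac Ey (third_sym ST ac) eqxx => /(_ isT).
- by move: yqr; rewrite eq_sym ac Ey (third_sym ST ac) eqxx => /(_ isT).
Qed.

Lemma take_cat_take {T : Type} (s t : seq T) : take 3 (s ++ take 3 t) = take 3 (s ++ t).
Proof.
rewrite !take_cat; case: ltnP => // _; rewrite take_takel //; lia.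
Qed.

Lemma G_cat_take {v} (B : {set {set 'I_v}}) l1 l2 :
  G B (l1 ++ take 3 l2) -> G B l2 -> G B (l1 ++ l2).
Proof.
elim: l1 => [|x l1 IH] //= /andP [h1 h2] h3.
by rewrite -take_cat_take h1 IH.
Qed.

Lemma G_catr {v} (B : {set {set 'I_v}}) l1 l2 : G B (l1 ++ l2) -> G B l2.
Proof. by elim: l1 => [|x l1 IH] //= /andP [_ /IH]. Qed.

Lemma G_catl {v} (B : {set {set 'I_v}}) l1 l2 : G B (l1 ++ l2) -> G B l1.
Proof.
elim: l1 => [|x l1 IH] //= /andP [h1 /IH ->]; rewrite andbT.
apply: okb_sub h1 => z; rewrite !inE => /orP [->//|zt]; apply/orP; right.
by move: zt; rewrite take_cat; case: ltnP => // _ /mem_take; rewrite mem_cat => ->.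
Qed.

Lemma G_good {v} (B : {set {set 'I_v}}) s : G B s -> is_good 4 B s.
Proof.
move=> Gs i si; have := @G_catr v B (take i s) (drop i s); rewrite cat_take_drop.
move/(_ Gs); case E: (drop i s) => [|x s'].
  by move: (size_drop i s); rewrite E /=; lia.
by move=> /= /andP [/forall_inP H _].
Qed.

Definition fb {v} (B : {set {set 'I_v}}) (r : seq 'I_v) : seq 'I_v :=
  match r with
  | a :: b :: c :: _ => [:: third B a b; third B a c; third B b c]
  | [:: a; b] => [:: third B a b]
  | _ => [::]
  end.

Lemma size_fb {v} (B : {set {set 'I_v}}) r : size (fb B r) <= 3.
Proof. by case: r => [|a [|b [|c r]]]. Qed.

Lemma app {v} (B : {set {set 'I_v}}) r x : is_STS B -> G B r -> uniq r ->
  x \notin r -> x \notin fb B r -> G B (x :: r) && uniq (x :: r).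
Proof.
move=> ST Gr ur xr xf; rewrite /= Gr xr ur !andbT.
case: r Gr ur xr xf => [|a [|b [|c r]]] Gr ur xr xf.
- by apply: okb_small.
- by apply: okb_small.
- have ok2 : okb B [:: a; b; b] by apply: okb_sub (okb_small ST (l := [:: a; b]) _) => // z; rewrite !inE orbb.
  apply: okb_sub (@okb_ins3 v B a b b x ST ok2 _ _ _ _).
  + by move=> z; rewrite !inE => /or3P [] /eqP ->; rewrite ?eqxx ?orbT.
  + by move: xr; rewrite !inE orbb.
  + by move: xf; rewrite !inE.
  + by move: xf; rewrite !inE.
  + by rewrite eqxx.
- have ok3 : okb B [:: a; b; c].
    have sub : forall s, {subset [:: a; b; c] <= [:: a, b, c & s]}.
      by move=> s z; rewrite !inE => /or3P [] ->; rewrite ?orbT.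
    by move: Gr => /andP [h _]; apply: okb_sub h; apply: (sub (take 1 r)).
  have -> : take 3 [:: a, b, c & r] = [:: a; b; c] by rewrite /= take0.
  apply: (@okb_ins3 v B a b c x ST ok3 _ _ _ _).
  + by move: xr; rewrite !inE !negb_or => /and4P [-> -> -> _].
  + by move: xf; rewrite !inE !negb_or => /and3P [].
  + by move: xf; rewrite !inE !negb_or => /and3P [].
  + by move: xf; rewrite !inE !negb_or => /and3P [].
Qed.

Lemma uniq_size_le {v} (s : seq 'I_v) : uniq s -> size s <= v.
Proof. by move=> us; rewrite -(card_uniqP us); apply: leq_trans (max_card _) _; rewrite card_ord. Qed.

Lemma exists_avoid {v} (r L : seq 'I_v) : size r + size L < v ->
  exists x, (x \notin r) && (x \notin L).
Proof.
move=> h; case: (pickP [pred x | (x \notin r) && (x \notin L)]) => [x H|H]; first by exists x.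
have : #|'I_v| <= #|r ++ L|.
  apply: subset_leq_card; apply/subsetP => x _; have := H x; rewrite /= mem_cat.
  by case: (x \in r) => //= /negbFE.
rewrite card_ord => h2; exfalso; have := leq_trans h2 (card_size _); rewrite size_cat => h3; by move: (leq_trans h h3); rewrite ltnn.
Qed.

Lemma build {v} (B : {set {set 'I_v}}) n : is_STS B -> n + 3 < v ->
  exists r, [/\ size r = n, G B r & uniq r].
Proof.
move=> ST; elim: n => [|n IH] h; first by exists [::].
have [r [sr Gr ur]] := IH (ltnW h).
have [x /andP [xr xf]] : exists x, (x \notin r) && (x \notin fb B r).
  by apply: exists_avoid; have := size_fb B r; lia.
have /andP [G1 u1] := app ST Gr ur xr xf.
by exists (x :: r); rewrite /= sr.
Qed.

Lemma phase2 {v} (B : {set {set 'I_v}}) (Z : seq 'I_v) : is_STS B -> 71 < v ->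
  forall r : seq 'I_v, G B r -> uniq r -> 3 <= size r -> size r + 3 * size Z <= 54 ->
  exists r' : seq 'I_v, [/\ G B r', uniq r', (exists l, r' = l ++ r) & {subset Z <= r'}].
Proof.
move=> ST hv; elim: Z => [|z Z IH] r Gr ur sr hs.
  by exists r; split => //; exists [::].
case zr: (z \in r).
  have hs' : size r + 3 * size Z <= 54 by move: hs => /=; lia.
  have [r' [G' u' [l E] sub]] := IH r Gr ur sr hs'.
  exists r'; split => //; first by exists l.
  move=> y; rewrite inE => /orP [/eqP ->|/sub //]; by rewrite E mem_cat zr orbT.
case: r Gr ur sr hs zr => [|r1 rr] // Gr ur sr hs zr.
move: hs => /= hs; set r := r1 :: rr.
have [f1 /andP [f1r f1L]] : exists f1, (f1 \notin r) && (f1 \notin fb B r ++ [:: third B r1 z] ++ z :: Z).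
  apply: exists_avoid; rewrite !size_cat /=; have := size_fb B r; rewrite /r /=; lia.
have [f2 /andP [f2r f2L]] : exists f2, (f2 \notin f1 :: r) &&
   (f2 \notin fb B (f1 :: r) ++ [:: third B r1 z; third B f1 z] ++ z :: Z).
  apply: exists_avoid; rewrite !size_cat /=; have := size_fb B (f1 :: r); rewrite /r /=; lia.
move: f1L f2L; rewrite !mem_cat !negb_or => /and3P [f1f f1t f1Z] /and3P [f2f f2t f2Z].
have /andP [G1 u1] := app ST Gr ur f1r f1f.
have /andP [G2 u2] := app ST G1 u1 f2r f2f.
move: f1t => /andP [f1t _].
move: f2t => /and3P [f2t1 f2t2 _].
move: f1Z => /andP [f1z _].
move: f2Z => /andP [f2z _].
have f1r1 : f1 != r1 by move: f1r; rewrite in_cons negb_or => /andP [].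
have f2f1 : f2 != f1 by move: f2r; rewrite in_cons negb_or => /andP [].
have f2r1 : f2 != r1 by move: f2r; rewrite !in_cons !negb_or => /and3P [].
have zr1 : z != r1 by move: zr; rewrite in_cons => /norP [].
have zf1 : z != f1 by rewrite eq_sym.
have zf2 : z != f2 by rewrite eq_sym.
have zn : z \notin f2 :: f1 :: r.
  rewrite !in_cons; apply/norP; split; first exact: zf2.
  by apply/norP; split; [exact: zf1 | exact: negbT zr].
have zfb : z \notin fb B (f2 :: f1 :: r).
  rewrite /r /=; apply/negP; rewrite !inE => /or3P [] /eqP E.
  - by move: f2t2; rewrite -(third_swap ST f2f1 zf2 zf1 E) eqxx.
  - by move: f2t1; rewrite -(third_swap ST f2r1 zf2 zr1 E) eqxx.
  - by move: f1t; rewrite -(third_swap ST f1r1 zf1 zr1 E) eqxx.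
have /andP [G3 u3] := app ST G2 u2 zn zfb.
have hs' : size (z :: f2 :: f1 :: r) + 3 * size Z <= 54.
  rewrite /r /=; move: hs; clear -rr Z; lia.
have [r' [G' u' [l E] sub]] := IH (z :: f2 :: f1 :: r) G3 u3 isT hs'.
exists r'; split => //; first by exists (l ++ [:: z; f2; f1]); rewrite E -catA.
move=> y; rewrite inE => /orP [/eqP ->|/sub //]; by rewrite E mem_cat inE eqxx orbT.
Qed.

Lemma phase3 {v} (B : {set {set 'I_v}}) n : is_STS B -> forall r : seq 'I_v,
  v - size r <= n -> G B r -> uniq r ->
  exists r' : seq 'I_v, [/\ G B r', uniq r', (exists l, r' = l ++ r) &
    forall x, x \notin r' -> x \in fb B r'].
Proof.
move=> ST; elim: n => [|n IH] r hn Gr ur;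
  case: (pickP [pred x | (x \notin r) && (x \notin fb B r)]) => [x /andP [xr xf] | H].
- have /andP [_ u1] := app ST Gr ur xr xf.
  have := uniq_size_le u1; rewrite /=; move: hn; clear; lia.
- exists r; split => //; first by exists [::].
  by move=> x xr; have := H x; rewrite /= xr /= => /negbFE.
- have /andP [G1 u1] := app ST Gr ur xr xf.
  have h1 : v - size (x :: r) <= n.
    have := uniq_size_le u1; rewrite /=; move: hn; clear; lia.
  have [r' [G' u' [l E] H']] := IH _ h1 G1 u1.
  by exists r'; split => //; exists (l ++ [:: x]); rewrite E -catA.
- exists r; split => //; first by exists [::].
  by move=> x xr; have := H x; rewrite /= xr /= => /negbFE.
Qed.

Lemma win_ins {v} (B : {set {set 'I_v}}) p q r y (W W' : seq 'I_v) : is_STS B -> okb B W ->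
  {subset [:: p; q; r] <= W} -> {subset W' <= [:: y; p; q; r]} ->
  y \notin [:: p; q; r] -> y != third B p q -> y != third B p r -> y != third B q r ->
  okb B W'.
Proof.
move=> ST HW s1 s2 yn ypq ypr yqr.
exact: okb_sub s2 (okb_ins3 ST (okb_sub s1 HW) yn (fun _ => ypq) (fun _ => ypr) (fun _ => yqr)).
Qed.

Ltac memtac := rewrite !inE; repeat rewrite eqxx; rewrite /= ?orbT //.
Ltac solve_sub := apply/allP; rewrite /= !inE; repeat rewrite eqxx; rewrite ?orbT //.

Definition ocons {T : Type} (o : option T) (s : seq T) := if o is Some y then y :: s else s.

Lemma hole_mid {v} (B : {set {set 'I_v}}) l p1 p2 p3 q1 q2 q3 s o : is_STS B ->
  G B (l ++ [:: p1, p2, p3, q1, q2, q3 & s]) ->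
  (forall y, o = Some y -> y \notin [:: p1; p2; p3; q1; q2; q3] /\
     y \notin [:: third B p1 p2; third B p1 p3; third B p2 p3; third B p2 q1; third B p3 q1;
                 third B p3 q2; third B q1 q2; third B q1 q3; third B q2 q3]) ->
  G B (l ++ [:: p1, p2, p3 & ocons o [:: q1, q2, q3 & s]]).
Proof.
move=> ST H; case: o => [y|] Hy //; have [yP yT] := Hy y erefl.
have yT' : forall t, t \in [:: third B p1 p2; third B p1 p3; third B p2 p3; third B p2 q1; third B p3 q1;
                 third B p3 q2; third B q1 q2; third B q1 q3; third B q2 q3] -> y != t.
  by move=> t tin; apply: contra yT => /eqP ->.
have yP' : forall t, t \in [:: p1; p2; p3; q1; q2; q3] -> y != t.
  by move=> t tin; apply: contra yP => /eqP ->.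
apply: G_cat_take.
  have -> : take 3 [:: p1, p2, p3, y, q1, q2, q3 & s] = [:: p1; p2; p3] by [].
  have : G B ((l ++ [:: p1; p2; p3]) ++ [:: q1, q2, q3 & s]) by rewrite -catA.
  by move/G_catl.
have := G_catr H; rewrite /= ?take0 => /and4P [w1 w2 w3 Hq].
rewrite /= ?take0 Hq !andbT.
have yn : forall a b c, a \in [:: p1; p2; p3; q1; q2; q3] -> b \in [:: p1; p2; p3; q1; q2; q3] ->
   c \in [:: p1; p2; p3; q1; q2; q3] -> y \notin [:: a; b; c].
  move=> a b c ha hb hc; rewrite !inE !negb_or; apply/and3P; split; exact: yP'.
apply/and4P; split.
{ apply: (win_ins (p := p1) (q := p2) (r := p3) (y := y) ST w1).
  1,2: solve_sub.
  all: try (apply: yn; by memtac).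
  all: apply: yT'; by memtac. }
{ apply: (win_ins (p := p2) (q := p3) (r := q1) (y := y) ST w1).
  1,2: solve_sub.
  all: try (apply: yn; by memtac).
  all: apply: yT'; by memtac. }
{ apply: (win_ins (p := p3) (q := q1) (r := q2) (y := y) ST w2).
  1,2: solve_sub.
  all: try (apply: yn; by memtac).
  all: apply: yT'; by memtac. }
{ apply: (win_ins (p := q1) (q := q2) (r := q3) (y := y) ST w3).
  1,2: solve_sub.
  all: try (apply: yn; by memtac).
  all: apply: yT'; by memtac. }
Qed.

Lemma hole_end {v} (B : {set {set 'I_v}}) l p1 p2 p3 o : is_STS B ->
  G B (l ++ [:: p1; p2; p3]) ->
  (forall y, o = Some y -> y \notin [:: p1; p2; p3] /\
     y \notin [:: third B p1 p2; third B p1 p3; third B p2 p3]) ->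
  G B (l ++ [:: p1, p2, p3 & ocons o [::]]).
Proof.
move=> ST H; case: o => [y|] Hy //; have [yP yT] := Hy y erefl.
have yT' : forall t, t \in [:: third B p1 p2; third B p1 p3; third B p2 p3] -> y != t.
  by move=> t tin; apply: contra yT => /eqP ->.
apply: G_cat_take => //.
have /andP [w _] := G_catr H.
have w4 : okb B [:: p1; p2; p3; y].
{ apply: (win_ins (p := p1) (q := p2) (r := p3) (y := y) ST w).
  1,2: solve_sub.
  by [].
  all: apply: yT'; by memtac. }
rewrite /= !andbT w4 /=; apply/and3P; split; apply: okb_sub w4; solve_sub.
Qed.

Definition Sl {v} (B : {set {set 'I_v}}) (x9 x8 x7 x6 x5 x4 x3 x2 x1 : 'I_v) : seq 'I_v :=
  [:: third B x9 x8; third B x9 x7; third B x8 x7; third B x8 x6; third B x7 x6;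
      third B x7 x5; third B x6 x5; third B x6 x4; third B x5 x4; third B x5 x3;
      third B x4 x3; third B x4 x2; third B x3 x2; third B x3 x1; third B x2 x1].

Lemma final_G {v} (B : {set {set 'I_v}}) rest x9 x8 x7 x6 x5 x4 x3 x2 x1 oA oB oC : is_STS B ->
  G B (rest ++ [:: x9; x8; x7; x6; x5; x4; x3; x2; x1]) ->
  (forall y, y \in ocons oA (ocons oB (ocons oC [::])) ->
     y \notin [:: x9; x8; x7; x6; x5; x4; x3; x2; x1] /\ y \notin Sl B x9 x8 x7 x6 x5 x4 x3 x2 x1) ->
  G B (rest ++ [:: x9, x8, x7 & ocons oA [:: x6, x5, x4 & ocons oB [:: x3, x2, x1 & ocons oC [::]]]]).
Proof.
move=> ST H Hy.
have sub : forall (s1 s2 : seq 'I_v) y, {subset s1 <= s2} -> y \notin s2 -> y \notin s1.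
  by move=> s1 s2 y ss; apply: contra => /ss.
have HA : forall y, oA = Some y -> y \in ocons oA (ocons oB (ocons oC [::])).
  by move=> y ->; rewrite inE eqxx.
have HB : forall y, oB = Some y -> y \in ocons oA (ocons oB (ocons oC [::])).
  by move=> y ->; case: (oA) => [a|] /=; rewrite !inE eqxx ?orbT.
have HC : forall y, oC = Some y -> y \in ocons oA (ocons oB (ocons oC [::])).
  by move=> y ->; case: (oA) => [a|]; case: (oB) => [b|] /=; rewrite !inE eqxx ?orbT.
have H1 : G B ((rest ++ [:: x9; x8; x7; x6; x5; x4]) ++ [:: x3, x2, x1 & ocons oC [::]]).
  apply: hole_end => //; first by rewrite -catA.
  move=> y /HC /Hy [yP yS]; split.
    by apply: sub yP; solve_sub.
  by apply: sub yS; solve_sub.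
have H2 : G B ((rest ++ [:: x9; x8; x7]) ++ [:: x6, x5, x4 & ocons oB [:: x3, x2, x1 & ocons oC [::]]]).
  apply: hole_mid => //; first by move: H1; rewrite -!catA.
  move=> y /HB /Hy [yP yS]; split.
    by apply: sub yP; solve_sub.
  by apply: sub yS; solve_sub.
apply: hole_mid => //; first by move: H2; rewrite -!catA.
move=> y /HA /Hy [yP yS]; split.
  by apply: sub yP; solve_sub.
by apply: sub yS; solve_sub.
Qed.

Lemma perm_tail {T : eqType} (x9 x8 x7 x6 x5 x4 x3 x2 x1 : T) oA oB oC :
  perm_eq [:: x9, x8, x7 & ocons oA [:: x6, x5, x4 & ocons oB [:: x3, x2, x1 & ocons oC [::]]]]
          ([:: x9; x8; x7; x6; x5; x4; x3; x2; x1] ++ ocons oA (ocons oB (ocons oC [::]))).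
Proof.
apply/permP => P.
case: oA => [a|]; case: oB => [b|]; case: oC => [c|]; rewrite /= ?addn0; lia.
Qed.

Unset Implicit Arguments.

Theorem theorem3 (v : nat) (B : {set {set 'I_v}}) :
  71 < v -> is_STS B ->
  exists s : seq 'I_v, is_sequencing s /\ is_good 4 B s.
Proof.
move=> hv ST.
have h12 : 9 + 3 < v by move: hv; clear; lia.
have [r0 [s0 G0 u0]] := @build v B 9 ST h12.
case: r0 s0 G0 u0 => [|x9 [|x8 [|x7 [|x6 [|x5 [|x4 [|x3 [|x2 [|x1 [|? ?]]]]]]]]]] // _ G0 u0.
set r0 := [:: x9; x8; x7; x6; x5; x4; x3; x2; x1] in G0 u0.
have [r2 [G2 u2 [l2 E2] S2]] := @phase2 v B (Sl B x9 x8 x7 x6 x5 x4 x3 x2 x1) ST hv r0 G0 u0 isT isT.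
have [r3 [G3 u3 [l3 E3] H3]] := @phase3 v B v ST r2 (leq_subr _ _) G2 u2.
set L := [seq x <- enum 'I_v | x \notin r3].
have E : r3 = (l3 ++ l2) ++ r0 by rewrite E3 E2 catA.
have Lfree : forall y, y \in L -> y \notin r0 /\ y \notin Sl B x9 x8 x7 x6 x5 x4 x3 x2 x1.
  move=> y; rewrite mem_filter => /andP [yr _]; split.
    by apply: contra yr => yr0; rewrite E mem_cat yr0 orbT.
  by apply: contra yr => /S2 yr2; rewrite E3 mem_cat yr2 orbT.
have uL : uniq L by rewrite filter_uniq // enum_uniq.
have Lsz : size L <= 3.
  apply: leq_trans (size_fb B r3).
  by apply: uniq_leq_size => // y; rewrite mem_filter => /andP [/H3].
have Lu : uniq (r3 ++ L).
  rewrite cat_uniq u3 uL andbT; apply/hasPn => y; rewrite mem_filter => /andP [].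
  by [].
have Lall : forall x, x \in r3 ++ L.
  by move=> x; rewrite mem_cat mem_filter mem_enum andbT orbN.
have [oA [oB [oC EL]]] : exists oA oB oC, L = ocons oA (ocons oB (ocons oC [::])).
  move: Lsz; case: (L) => [|a [|b [|c [|d t]]]] //= _.
  - by exists None, None, None.
  - by exists (Some a), None, None.
  - by exists (Some a), (Some b), None.
  - by exists (Some a), (Some b), (Some c).
set F := (l3 ++ l2) ++ [:: x9, x8, x7 & ocons oA [:: x6, x5, x4 & ocons oB [:: x3, x2, x1 & ocons oC [::]]]].
have GF : G B F.
  apply: final_G => //; first by rewrite -E.
  by move=> y; rewrite -EL => /Lfree.
have pF : perm_eq F (r3 ++ L).
  by rewrite E EL -catA perm_cat2l perm_tail.
exists F; split; last exact: G_good.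
split; first by rewrite (perm_uniq pF).
rewrite (perm_size pF) -(card_uniqP Lu).
apply/eqP; rewrite eqn_leq; apply/andP; split.
  by apply: leq_trans (max_card _) _; rewrite card_ord.
rewrite -{1}(card_ord v); apply: subset_leq_card; apply/subsetP => x _; exact: Lall.
Qed.
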